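(* For every $k\ge1$ and every vector $\vec v_0$ of natural numbers over the counters of $\mathcal B_k$ such that $\vec v_0(d_i)=\vec v_0(d'_i)=0$ for all $i<k$, the BVASS $\mathcal B_k$ has a $(q^{\mathrm{init}}_k,\vec v_0)$-rooted $\{q^{\mathrm{leaf}}\}$-leaf-covering deduction tree if and only if $\vec v_0(d_k)\ge\mathrm{tower}(k)$.
   Context: A BVASS of dimension $D$ with counters indexed by a finite set consists of a finite set of states, unary rules $q\xrightarrow{\vec u}q_1$ with $\vec u\in\mathbb Z^D$, and split rules $q\to q_1+q_2$. A deduction tree is a finite tree labelled by configurations $(q,\vec v)$, $\vec v\in\mathbb N^D$, where each internal node $(q,\vec v)$ has either one child $(q_1,\vec v+\vec u)$ (with $\vec v+\vec u\ge\vec 0$) for a unary rule $(q,\vec u,q_1)$, or two children $(q_1,\vec v_1),(q_2,\vec v_2)$ with $\vec v_1+\vec v_2=\vec v$ for a split rule $(q,q_1,q_2)$. It is $(q,\vec v)$-rooted if its root is labelled $(q,\vec v)$ and $Q_\ell$-leaf-covering if the state of every leaf label is in $Q_\ell$ (no condition on vectors). $\mathrm{tower}(0)=1$, $\mathrm{tower}(n+1)=2^{\mathrm{tower}(n)}$. The BVASS $\mathcal B_k$ has counters $d_1,\dots,d_k,d'_1,\dots,d'_{k-1}$, defined recursively. $\mathcal B_1$ has states $q^{\mathrm{init}}_1,q^{\mathrm{leaf}}$ and one unary rule $q^{\mathrm{init}}_1\xrightarrow{-2\vec e_{d_1}}q^{\mathrm{leaf}}$. For $k>1$, $\mathcal B_k$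 consists of $\mathcal B_{k-1}$ plus new states $q^{\mathrm{init}}_k,q^1_k,q^2_k,q^{\mathrm{loop}}_k$ and rules: $q^{\mathrm{init}}_k\xrightarrow{\vec e_{d_{k-1}}}q^1_k$; $q^1_k\xrightarrow{-\vec e_{d_{k-1}}+2\vec e_{d'_{k-1}}}q^1_k$; $q^1_k\xrightarrow{\vec 0}q^2_k$; $q^2_k\xrightarrow{-\vec e_{d'_{k-1}}+\vec e_{d_{k-1}}}q^2_k$; split $q^2_k\to q^{\mathrm{loop}}_k+q^{\mathrm{loop}}_k$; $q^{\mathrm{loop}}_k\xrightarrow{\vec 0}q^{\mathrm{init}}_k$; and $q^{\mathrm{loop}}_k\xrightarrow{-\vec e_{d_k}}q^{\mathrm{init}}_{k-1}$. Here $\vec e_c$ denotes the unit vector for counter $c$. *)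

(* Defs.v *)
From Stdlib Require Import Arith ZArith Bool.
Open Scope Z_scope.

Record BVASS (Q C : Type) := mkBVASS {
  unary_rule : Q -> (C -> Z) -> Q -> Prop;
  split_rule : Q -> Q -> Q -> Prop
}.
Arguments unary_rule {Q C} _ _ _ _.
Arguments split_rule {Q C} _ _ _ _.

Inductive dtree (Q C : Type) : Type :=
| DLeaf  : Q -> (C -> nat) -> dtree Q C
| DUnary : Q -> (C -> nat) -> dtree Q C -> dtree Q C
| DSplit : Q -> (C -> nat) -> dtree Q C -> dtree Q C -> dtree Q C.
Arguments DLeaf {Q C} _ _.
Arguments DUnary {Q C} _ _ _.
Arguments DSplit {Q C} _ _ _ _.

Definition dstate {Q C} (t : dtree Q C) : Q :=
  match t with DLeaf q _ | DUnary q _ _ | DSplit q _ _ _ => q end.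
Definition dvec {Q C} (t : dtree Q C) : C -> nat :=
  match t with DLeaf _ v | DUnary _ v _ | DSplit _ v _ _ => v end.

Fixpoint is_deduction_tree {Q C} (B : BVASS Q C) (t : dtree Q C) : Prop :=
  match t with
  | DLeaf _ _ => True
  | DUnary q v t1 =>
      (exists u : C -> Z,
          unary_rule B q u (dstate t1) /\
          (* child vector = v + u (which is therefore >= 0) *)
          forall c, Z.of_nat (dvec t1 c) = Z.of_nat (v c) + u c)
      /\ is_deduction_tree B t1
  | DSplit q v t1 t2 =>
      split_rule B q (dstate t1) (dstate t2) /\
      (forall c, (dvec t1 c + dvec t2 c)%nat = v c) /\
      is_deduction_tree B t1 /\ is_deduction_tree B t2
  end.

Definition rooted {Q C} (t : dtree Q C) (q : Q) (v : C -> nat) : Prop :=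
  dstate t = q /\ forall c, dvec t c = v c.

Fixpoint leaf_covering {Q C} (Ql : Q -> Prop) (t : dtree Q C) : Prop :=
  match t with
  | DLeaf q _ => Ql q
  | DUnary _ _ t1 => leaf_covering Ql t1
  | DSplit _ _ t1 t2 => leaf_covering Ql t1 /\ leaf_covering Ql t2
  end.

Fixpoint tower (n : nat) : nat :=
  match n with O => 1 | S m => 2 ^ tower m end.

Inductive ctr : Type := cd (i : nat) | cd' (i : nat).

Definition ctr_eqb (a b : ctr) : bool :=
  match a, b with
  | cd i, cd j => Nat.eqb i j
  | cd' i, cd' j => Nat.eqb i j
  | _, _ => false
  end.

Definition is_bctr (k : nat) (c : ctr) : bool :=
  match c with
  | cd i => (1 <=? i)%nat && (i <=? k)%nat
  | cd' i => (1 <=? i)%nat && (i <? k)%nat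
  end.
Definition bctr (k : nat) : Type := { c : ctr | is_bctr k c = true }.

Definition evec (k : nat) (c : ctr) : bctr k -> Z :=
  fun x => if ctr_eqb (proj1_sig x) c then 1 else 0.
Definition zvec (k : nat) : bctr k -> Z := fun _ => 0.
Definition vadd {k} (u w : bctr k -> Z) : bctr k -> Z := fun x => u x + w x.
Definition vscale {k} (a : Z) (u : bctr k -> Z) : bctr k -> Z := fun x => a * u x.

(* B_k uses qinit j (1<=j<=k),
   q1/q2/qloop j (2<=j<=k) and qleaf; only these occur in its rules. *)
Inductive bstate : Type :=
| qinit (j : nat) | q1 (j : nat) | q2 (j : nat) | qloop (j : nat) | qleaf.

(* Unary rules of B_k (B_k = B_{k-1} plus the level-k rules, unfolded). *)
Inductive Bk_unary (k : nat) : bstate -> (bctr k -> Z) -> bstate -> Prop :=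
| BU_base : (1 <= k)%nat ->
    Bk_unary k (qinit 1) (vscale (-2) (evec k (cd 1))) qleaf
| BU_init : forall j, (2 <= j <= k)%nat ->
    Bk_unary k (qinit j) (evec k (cd (j - 1))) (q1 j)
| BU_loop1 : forall j, (2 <= j <= k)%nat ->
    Bk_unary k (q1 j)
      (vadd (vscale (-1) (evec k (cd (j - 1)))) (vscale 2 (evec k (cd' (j - 1)))))
      (q1 j)
| BU_12 : forall j, (2 <= j <= k)%nat ->
    Bk_unary k (q1 j) (zvec k) (q2 j)
| BU_loop2 : forall j, (2 <= j <= k)%nat ->
    Bk_unary k (q2 j)
      (vadd (vscale (-1) (evec k (cd' (j - 1)))) (evec k (cd (j - 1))))
      (q2 j)
| BU_back : forall j, (2 <= j <= k)%nat ->
    Bk_unary k (qloop j) (zvec k) (qinit j)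
| BU_down : forall j, (2 <= j <= k)%nat ->
    Bk_unary k (qloop j) (vscale (-1) (evec k (cd j))) (qinit (j - 1)).

Inductive Bk_split (k : nat) : bstate -> bstate -> bstate -> Prop :=
| BS : forall j, (2 <= j <= k)%nat -> Bk_split k (q2 j) (qloop j) (qloop j).

Definition B (k : nat) : BVASS bstate (bctr k) :=
  mkBVASS bstate (bctr k) (Bk_unary k) (Bk_split k).

Lemma is_bctr_dk (k : nat) : (1 <= k)%nat -> is_bctr k (cd k) = true.
Proof.
  intro H; unfold is_bctr. apply andb_true_intro; split.
  - apply (proj2 (Nat.leb_le 1 k)); exact H.
  - apply (proj2 (Nat.leb_le k k)); apply le_n.
Qed.
Definition dk (k : nat) (Hk : (1 <= k)%nat) : bctr k := exist _ (cd k) (is_bctr_dk k Hk).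

(* Main.v *)
Require Import Defs.
From Stdlib Require Import Arith ZArith Lia Bool Eqdep_dec.

Local Open Scope nat_scope.

Lemma sq_le X Y : X*X <= Y*Y -> X <= Y.
Proof. intros. destruct (Nat.le_gt_cases X Y); auto. exfalso. assert (Y*Y < X*X) by (apply Nat.mul_lt_mono; auto). lia. Qed.

Lemma amgm c1 c2 : 4*(c1*c2) <= (c1+c2)^2.
Proof. simpl. destruct (Nat.le_ge_cases c1 c2) as [H|H].
 - destruct (Nat.le_exists_sub _ _ H) as [d [-> _]]. nia.
 - destruct (Nat.le_exists_sub _ _ H) as [d [-> _]]. nia. Qed.

Lemma ar_split c1 c2 X P1 P2 : X*X <= c1^4*(P1*P1) -> X*X <= c2^4*(P2*P2) -> 16*(X*X) <= (c1+c2)^4*(P1*P2).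
Proof. intros H H0.
assert (E: forall c, c^4 = c^2*c^2) by (intros; simpl; ring).
assert (X <= c1^2*P1). { apply sq_le. rewrite E in H. nia. }
assert (X <= c2^2*P2). { apply sq_le. rewrite E in H0. nia. }
assert (16*(c1^2*c2^2) <= (c1+c2)^4). { rewrite E. pose proof (amgm c1 c2).
  replace (16*(c1^2*c2^2)) with ((4*(c1*c2))*(4*(c1*c2))) by (simpl; ring). apply Nat.mul_le_mono; auto. }
assert (X*X <= (c1^2*P1)*(c2^2*P2)) by (apply Nat.mul_le_mono; auto).
replace ((c1^2*P1)*(c2^2*P2)) with ((c1^2*c2^2)*(P1*P2)) in H4 by ring.
assert (16*(c1^2*c2^2)*(P1*P2) <= (c1+c2)^4*(P1*P2)) by (apply Nat.mul_le_mono_r; auto). lia. Qed.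

Lemma bctr_eq k (x y : bctr k) : proj1_sig x = proj1_sig y -> x = y.
Proof. destruct x as [x Hx], y as [y Hy]; simpl; intros ->. f_equal. apply UIP_dec, bool_dec. Qed.

Definition cval {k} (v : bctr k -> nat) (c : ctr) : nat :=
  match bool_dec (is_bctr k c) true with left H => v (exist _ c H) | right _ => 0 end.
Definition ucv {k} (u : bctr k -> Z) (c : ctr) : Z :=
  match bool_dec (is_bctr k c) true with left H => u (exist _ c H) | right _ => 0%Z end.

Lemma cval_x k (v : bctr k -> nat) x : cval v (proj1_sig x) = v x.
Proof. unfold cval. destruct bool_dec as [H|H].
 - f_equal. apply bctr_eq. reflexivity.
 - destruct x; simpl in *; congruence. Qed.

Lemma cval_ext k (v w : bctr k -> nat) : (forall x, v x = w x) -> forall c, cval v c = cval w c.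
Proof. intros H c; unfold cval; destruct bool_dec; auto. Qed.

Lemma cval_sum k (v1 v2 v : bctr k -> nat) : (forall x, v1 x + v2 x = v x) -> forall c, cval v1 c + cval v2 c = cval v c.
Proof. intros H c; unfold cval; destruct bool_dec; auto. Qed.

Lemma step_cval k (v w : bctr k -> nat) (u : bctr k -> Z) :
  (forall x, Z.of_nat (w x) = (Z.of_nat (v x) + u x)%Z) ->
  forall c, Z.of_nat (cval w c) = (Z.of_nat (cval v c) + ucv u c)%Z.
Proof. intros H c; unfold cval, ucv; destruct bool_dec; auto. Qed.

Lemma ucv_evec k c' c : ucv (evec k c') c = if is_bctr k c then (if ctr_eqb c c' then 1 else 0)%Z else 0%Z.
Proof. unfold ucv, evec. destruct bool_dec as [H|H]; simpl. rewrite H; auto.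
  destruct (is_bctr k c); congruence. Qed.
Lemma ucv_vadd k (u1 u2 : bctr k -> Z) c : ucv (vadd u1 u2) c = (ucv u1 c + ucv u2 c)%Z.
Proof. unfold ucv, vadd. destruct bool_dec; auto. Qed.
Lemma ucv_vscale k a (u : bctr k -> Z) c : ucv (vscale a u) c = (a * ucv u c)%Z.
Proof. unfold ucv, vscale. destruct bool_dec; auto; lia. Qed.
Lemma ucv_zvec k c : ucv (zvec k) c = 0%Z.
Proof. unfold ucv, zvec. destruct bool_dec; auto. Qed.

Lemma isb_cd k i : 1 <= i -> i <= k -> is_bctr k (cd i) = true.
Proof. intros; unfold is_bctr; apply andb_true_intro; split; [apply Nat.leb_le|apply Nat.leb_le]; lia. Qed.
Lemma isb_cd' k i : 1 <= i -> i < k -> is_bctr k (cd' i) = true.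
Proof. intros; unfold is_bctr; apply andb_true_intro; split; [apply Nat.leb_le|apply Nat.ltb_lt]; lia. Qed.

Definition lowz (j : nat) (V : ctr -> nat) : Prop := forall i, i < j -> V (cd i) = 0 /\ V (cd' i) = 0.

Definition Inv (m : nat) (s : bstate) (V : ctr -> nat) : Prop :=
  let a := V (cd m) in let b := V (cd' m) in let c := V (cd (S m)) in
  let X := 2^(2*tower m) in
  match s with
  | qinit j | qloop j => j = S m -> X*X <= c^4 * (2^(2*a+b) * 2^(2*a+b))
  | q1 j => j = S m -> 16*(X*X) <= c^4 * (2^(2*a+b) * 2^(2*a+b))
  | q2 j => j = S m -> 16*(X*X) <= c^4 * 2^(2*a+2*b)
  | qleaf => True end.

Ltac clean H := rewrite ?ucv_vadd, ?ucv_vscale, ?ucv_evec, ?ucv_zvec in H; cbn [ctr_eqb] in H;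
   repeat match type of H with context[Nat.eqb ?x ?y] => destruct (Nat.eqb_spec x y) end.

Lemma lowz_step k m (W V : bctr k -> nat) u :
  (forall x, Z.of_nat (W x) = (Z.of_nat (V x) + u x)%Z) -> lowz m (cval V) ->
  (forall i, i < m -> ucv u (cd i) = 0%Z /\ ucv u (cd' i) = 0%Z) -> lowz m (cval W).
Proof. intros H HV Hu i Hi. pose proof (step_cval _ _ _ _ H) as E.
  destruct (HV i Hi), (Hu i Hi). pose proof (E (cd i)); pose proof (E (cd' i)). lia. Qed.

Ltac lowzu := intros ?i ?Hi; rewrite ?ucv_vadd, ?ucv_vscale, ?ucv_evec, ?ucv_zvec; cbn [ctr_eqb];
   repeat match goal with |- context[Nat.eqb ?x ?y] => destruct (Nat.eqb_spec x y); [exfalso; lia|] end;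
   repeat match goal with |- context[is_bctr ?a ?b] => destruct (is_bctr a b) end; lia.

Lemma pow4 a b : 2^(2*(a+1)+b) = 4 * 2^(2*a+b).
Proof. replace (2*(a+1)+b) with (2 + (2*a+b)) by lia. rewrite Nat.pow_add_r. reflexivity. Qed.

Lemma level k m (Hm: 1 <= m) (Hmk: S m <= k)
  (UBm : forall t, is_deduction_tree (B k) t -> leaf_covering (fun q => q = qleaf) t ->
         dstate t = qinit m -> lowz m (cval (dvec t)) -> tower m <= cval (dvec t) (cd m)) :
  forall t, is_deduction_tree (B k) t -> leaf_covering (fun q => q = qleaf) t ->
    lowz m (cval (dvec t)) -> Inv m (dstate t) (cval (dvec t)).
Proof.
  assert (Ia : is_bctr k (cd m) = true) by (apply isb_cd; lia).
  assert (Ib : is_bctr k (cd' m) = true) by (apply isb_cd'; lia).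
  assert (Ic : is_bctr k (cd (S m)) = true) by (apply isb_cd; lia).
  induction t as [s v | s v t1 IH | s v t1 IH1 t2 IH2]; intros Hd Hc Hl.
  - simpl in Hc; subst; exact I.
  - simpl in Hd. destruct Hd as [[u [Hr Hs]] Hd1]. simpl in Hc.
    pose proof (step_cval _ _ _ _ Hs) as E.
    pose proof (E (cd m)) as HA; pose proof (E (cd' m)) as HB; pose proof (E (cd (S m))) as HC.
    rewrite ?Ia, ?Ib, ?Ic in *.
    remember (dstate t1) as s1 eqn:Es1. simpl in Hr.
    inversion Hr; subst; simpl dstate; unfold Inv; intros Hj; try (exfalso; lia); subst.
    all: clean HA; clean HB; clean HC; rewrite ?Ia, ?Ib, ?Ic in *; try (exfalso; lia).
    all: simpl dvec.
    all: simpl dvec in *; match goal with H: _ = dstate _ |- _ => rename H into Es1 end.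
    all: assert (Hl1 : lowz m (cval (dvec t1))) by (eapply lowz_step; [exact Hs| exact Hl| lowzu]).
    all: remember (cval v (cd m)) as a; remember (cval v (cd' m)) as b; remember (cval v (cd (S m))) as c.
    all: remember (cval (dvec t1) (cd m)) as a'; remember (cval (dvec t1) (cd' m)) as b'; remember (cval (dvec t1) (cd (S m))) as c'.
    +
      specialize (IH Hd1 Hc Hl1). rewrite <- Es1 in IH. unfold Inv in IH. specialize (IH eq_refl).
      rewrite <- Heqa', <- Heqb', <- Heqc' in IH.
      replace a' with (a+1) in IH by lia. replace b' with b in IH by lia. replace c' with c in IH by lia.
      rewrite pow4 in IH. nia.
    +
      specialize (IH Hd1 Hc Hl1). rewrite <- Es1 in IH. unfold Inv in IH. specialize (IH eq_refl).
      rewrite <- Heqa', <- Heqb', <- Heqc' in IH.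
      replace (2*a'+b') with (2*a+b) in IH by lia. replace c' with c in IH by lia. exact IH.
    +
      specialize (IH Hd1 Hc Hl1). rewrite <- Es1 in IH. unfold Inv in IH. specialize (IH eq_refl).
      rewrite <- Heqa', <- Heqb', <- Heqc' in IH.
      replace a' with a in IH by lia. replace b' with b in IH by lia. replace c' with c in IH by lia.
      eapply Nat.le_trans; [exact IH|]. apply Nat.mul_le_mono_l. rewrite <- Nat.pow_add_r.
      apply Nat.pow_le_mono_r; lia.
    +
      specialize (IH Hd1 Hc Hl1). rewrite <- Es1 in IH. unfold Inv in IH. specialize (IH eq_refl).
      rewrite <- Heqa', <- Heqb', <- Heqc' in IH.
      replace (2*a'+2*b') with (2*a+2*b) in IH by lia. replace c' with c in IH by lia. exact IH.
    +
      specialize (IH Hd1 Hc Hl1). rewrite <- Es1 in IH. unfold Inv in IH. specialize (IH eq_refl).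
      rewrite <- Heqa', <- Heqb', <- Heqc' in IH.
      replace a' with a in IH by lia. replace b' with b in IH by lia. replace c' with c in IH by lia. exact IH.
    +
      replace (S m - 1) with m in Es1 by lia.
      assert (HT := UBm t1 Hd1 Hc (eq_sym Es1) Hl1). rewrite <- Heqa' in HT.
      assert (c >= 1) by lia. assert (tower m <= a) by lia.
      assert (2^(2*tower m) <= 2^(2*a+b)) by (apply Nat.pow_le_mono_r; lia).
      assert (1 <= c^4) by (apply (Nat.pow_le_mono_l 1 c 4); lia).
      nia.
  - simpl in Hd. destruct Hd as [Hr [Hsum [Hd1 Hd2]]]. simpl in Hc. destruct Hc as [Hc1 Hc2].
    simpl dvec in *. pose proof (cval_sum _ _ _ _ Hsum) as E.
    assert (Hl1 : lowz m (cval (dvec t1))) by (intros i Hi; destruct (Hl i Hi); pose proof (E (cd i)); pose proof (E (cd' i)); lia).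
    assert (Hl2 : lowz m (cval (dvec t2))) by (intros i Hi; destruct (Hl i Hi); pose proof (E (cd i)); pose proof (E (cd' i)); lia).
    specialize (IH1 Hd1 Hc1 Hl1). specialize (IH2 Hd2 Hc2 Hl2).
    remember (dstate t1) as s1 eqn:Es1. remember (dstate t2) as s2 eqn:Es2. simpl in Hr.
    inversion Hr; subst. simpl dstate. unfold Inv. intros Hj. subst.
    match goal with H: _ = dstate t1 |- _ => rewrite <- H in IH1 end.
    match goal with H: _ = dstate t2 |- _ => rewrite <- H in IH2 end. unfold Inv in IH1, IH2.
    specialize (IH1 eq_refl). specialize (IH2 eq_refl).
    rewrite <- (E (cd m)), <- (E (cd' m)), <- (E (cd (S m))).
    pose proof (ar_split _ _ _ _ _ IH1 IH2) as HH.
    eapply Nat.le_trans; [exact HH|]. apply Nat.mul_le_mono_l. rewrite <- Nat.pow_add_r.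
    apply Nat.pow_le_mono_r; lia.
Qed.

Lemma UB k : forall j, 1 <= j -> j <= k -> forall t, is_deduction_tree (B k) t ->
  leaf_covering (fun q => q = qleaf) t -> dstate t = qinit j -> lowz j (cval (dvec t)) ->
  tower j <= cval (dvec t) (cd j).
Proof.
  induction j as [|j IHj]; intros H1 Hk t Hd Hc Hst Hl; [lia|].
  destruct (Nat.eq_dec j 0) as [->|Hj0].
  - destruct t as [s v | s v t1 | s v t1 t2]; simpl in Hst; subst s.
    + simpl in Hc; discriminate.
    + simpl in Hd. destruct Hd as [[u [Hr Hs]] Hd1].
      pose proof (step_cval _ _ _ _ Hs (cd 1)) as HA.
      remember (dstate t1) as s1. simpl in Hr. inversion Hr; subst; [|lia].
      clean HA; rewrite (isb_cd k 1) in HA by lia; try (exfalso; lia). simpl. simpl tower. lia.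
    + simpl in Hd. destruct Hd as [Hr _]. simpl in Hr. inversion Hr.
  - rename j into m. assert (Hlm : lowz m (cval (dvec t))) by (intros i Hi; apply Hl; lia).
    pose proof (level k m ltac:(lia) Hk (IHj ltac:(lia) ltac:(lia)) t Hd Hc Hlm) as HI.
    rewrite Hst in HI. unfold Inv in HI. specialize (HI eq_refl).
    destruct (Hl m ltac:(lia)) as [Ha Hb]. rewrite Ha, Hb in HI. simpl (2*0+0) in HI.
    rewrite Nat.mul_1_r in HI.
    change (tower (S m)) with (2 ^ tower m).
    set (c := cval (dvec t) (cd (S m))) in *. clearbody c.
    destruct (Nat.le_gt_cases (2 ^ tower m) c) as [|Hlt]; auto. exfalso.
    assert (c^4 < (2^tower m)^4) by (apply Nat.pow_lt_mono_l; lia).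
    rewrite <- Nat.pow_mul_r in H. rewrite <- Nat.pow_add_r in HI.
    replace (tower m * 4) with (2*tower m + 2*tower m) in H by lia. lia.
Qed.

Definition Good k s (V : ctr -> nat) := exists t : dtree bstate (bctr k),
  is_deduction_tree (B k) t /\ rooted t s (fun x => V (proj1_sig x)) /\ leaf_covering (fun q => q = qleaf) t.

Definition upd (V : ctr -> nat) c n : ctr -> nat := fun c' => if ctr_eqb c' c then n else V c'.

Lemma good_ext k s V W : (forall c, V c = W c) -> Good k s V -> Good k s W.
Proof. intros H [t [Hd [[Hs Hv] Hc]]]. exists t; repeat split; auto. intros x; rewrite Hv; auto. Qed.

Lemma good_unary k s u s' V W : Bk_unary k s u s' ->
  (forall x, Z.of_nat (W (proj1_sig x)) = (Z.of_nat (V (proj1_sig x)) + u x)%Z) ->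
  Good k s' W -> Good k s V.
Proof. intros R H [t [Hd [[Hs Hv] Hc]]].
  exists (DUnary s (fun x => V (proj1_sig x)) t). repeat split; simpl; auto.
  exists u. split. rewrite Hs; exact R. intros c; rewrite Hv; apply H. Qed.

Lemma good_split k s s1 s2 V V1 V2 : Bk_split k s s1 s2 -> (forall c, V1 c + V2 c = V c) ->
  Good k s1 V1 -> Good k s2 V2 -> Good k s V.
Proof. intros R H [t1 [Hd1 [[Hs1 Hv1] Hc1]]] [t2 [Hd2 [[Hs2 Hv2] Hc2]]].
  exists (DSplit s (fun x => V (proj1_sig x)) t1 t2). repeat split; simpl; auto.
  rewrite Hs1, Hs2; exact R. intros c; rewrite Hv1, Hv2; apply H. Qed.

Lemma good_leaf k V : Good k qleaf V.
Proof. exists (DLeaf qleaf (fun x => V (proj1_sig x))). repeat split; simpl; auto. Qed.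

Lemma tower_pos n : 1 <= tower n.
Proof. induction n; simpl; [lia|]. pose proof (Nat.pow_nonzero 2 (tower n)). lia. Qed.

Ltac vsolve := repeat match goal with |- context[Nat.eqb ?a ?b] => destruct (Nat.eqb_spec a b) end; subst; try lia.
Ltac pw := let c := fresh "c" in intros c; unfold upd; destruct c as [?i|?i]; cbn [ctr_eqb]; vsolve.
Ltac stp := let c := fresh "c" in let Hc := fresh "Hc" in
  intros [c Hc]; unfold evec, vadd, vscale, zvec, upd; cbn [proj1_sig]; clear Hc;
  destruct c as [?i|?i]; cbn [ctr_eqb]; vsolve.
Ltac ev := unfold upd; cbn [ctr_eqb]; vsolve.


Lemma L1 k m (Hm : 1 <= m) (Hmk : S m <= k) : forall n V, V (cd m) = n ->
  Good k (q2 (S m)) (upd (upd V (cd m) 0) (cd' m) (V (cd' m) + 2*n)) -> Good k (q1 (S m)) V.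
Proof.
  induction n as [|n IH]; intros V HV HG.
  - apply (good_unary k _ (zvec k) (q2 (S m)) V V); [apply BU_12; lia| |].
    + stp.
    + eapply good_ext; [|exact HG]; pw.
  - pose proof (BU_loop1 k (S m) ltac:(lia)) as R. replace (S m - 1) with m in R by lia.
    eapply good_unary; [exact R| |]. 2: apply (IH (upd (upd V (cd m) n) (cd' m) (V (cd' m) + 2))).
    + stp.
    + ev.
    + eapply good_ext; [|exact HG]. pw.
Qed.

Lemma L2 k m (Hm : 1 <= m) (Hmk : S m <= k) : forall n V, V (cd' m) = n ->
  Good k (q2 (S m)) (upd (upd V (cd' m) 0) (cd m) (V (cd m) + n)) -> Good k (q2 (S m)) V.
Proof.
  induction n as [|n IH]; intros V HV HG.
  - eapply good_ext; [|exact HG]; pw.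
  - pose proof (BU_loop2 k (S m) ltac:(lia)) as R. replace (S m - 1) with m in R by lia.
    eapply good_unary; [exact R| |]. 2: apply (IH (upd (upd V (cd' m) n) (cd m) (V (cd m) + 1))).
    + stp.
    + ev.
    + eapply good_ext; [|exact HG]. pw.
Qed.

Definition HQ k m n := forall W, lowz m W -> W (cd' m) = 0 -> tower m <= W (cd m) + n ->
  2^n <= W (cd (S m)) -> Good k (qloop (S m)) W.

Lemma Round k m (Hm : 1 <= m) (Hmk : S m <= k) n : HQ k m n ->
  forall V, lowz m V -> V (cd' m) = 0 -> tower m <= V (cd m) + S n ->
  2^(S n) <= V (cd (S m)) -> Good k (qinit (S m)) V.
Proof.
  intros IH V Hl Hb HT Hc.
  set (a := V (cd m)) in *. set (c := V (cd (S m))) in *.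
  pose proof (BU_init k (S m) ltac:(lia)) as R. replace (S m - 1) with m in R by lia.
  apply (good_unary k _ _ _ V (upd V (cd m) (a+1)) R); [stp|].
  apply (L1 k m Hm Hmk (a+1)); [ev|].
  apply (L2 k m Hm Hmk (2*(a+1))); [ev|].
  pose proof (Nat.div_mod_eq c 2). pose proof (Nat.mod_upper_bound c 2 ltac:(lia)).
  simpl in Hc.
  apply (good_split k _ _ _ _ (upd (upd V (cd m) (a+1)) (cd (S m)) (c/2))
     (upd (upd (fun _ => 0) (cd m) (a+1)) (cd (S m)) (c - c/2)) (BS k (S m) ltac:(lia))).
  - pw.
  - apply IH.
    + intros i Hi. destruct (Hl i Hi). split; ev.
    + ev.
    + ev.
    + ev.
  - apply IH.
    + intros i Hi. split; ev.
    + ev.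
    + ev.
    + ev.
Qed.

Lemma pow2_pos x : 1 <= 2^x.
Proof. pose proof (Nat.pow_nonzero 2 x). lia. Qed.

Lemma L3 k m (Hm : 1 <= m) (Hmk : S m <= k)
  (LBm : forall V, lowz m V -> tower m <= V (cd m) -> Good k (qinit m) V) :
  forall n, HQ k m n.
Proof.
  induction n as [|n IH]; intros W Hl Hb HT Hc.
  all: destruct (Nat.le_gt_cases (tower m) (W (cd m))) as [Hge|Hlt].
  all: try (pose proof (BU_down k (S m) ltac:(lia)) as R; replace (S m - 1) with m in R by lia;
    pose proof (Nat.le_trans _ _ _ (pow2_pos _) Hc) as Hnz;
    apply (good_unary k _ _ _ W (upd W (cd (S m)) (W (cd (S m)) - 1)) R); [stp|];
    apply LBm; [intros i Hi; destruct (Hl i Hi); split; ev | solve [ev]]).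
  all: try lia.
  apply (good_unary k _ (zvec k) (qinit (S m)) W W); [apply BU_back; lia|stp|].
    apply (Round k m Hm Hmk n IH); auto; lia.
Qed.

Lemma LB k : forall j, 1 <= j -> j <= k -> forall V, lowz j V -> tower j <= V (cd j) -> Good k (qinit j) V.
Proof.
  induction j as [|j IHj]; intros H1 Hk V Hl HT; [lia|].
  destruct (Nat.eq_dec j 0) as [->|Hj0].
  - apply (good_unary k _ _ _ V (upd V (cd 1) (V (cd 1) - 2)) (BU_base k Hk)); [|apply good_leaf].
    simpl in HT. stp.
  - rename j into m. destruct (Hl m ltac:(lia)) as [Ha Hb].
    pose proof (tower_pos m). destruct (tower m) as [|n] eqn:Et; [lia|].
    apply (Round k m ltac:(lia) Hk n).
    + apply L3; try lia. intros W HW HW2. apply IHj; auto; lia.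
    + intros i Hi; apply Hl; lia.
    + auto.
    + lia.
    + simpl tower in HT. rewrite Et in HT. exact HT.
Qed.
Local Close Scope nat_scope.

Theorem lemma6p1 (k : nat) (Hk : (1 <= k)%nat) (v0 : bctr k -> nat)
  (Hv0 : forall x : bctr k,
      match proj1_sig x with cd i => (i < k)%nat | cd' i => (i < k)%nat end ->
      v0 x = 0%nat) :
  (exists t : dtree bstate (bctr k),
      is_deduction_tree (B k) t /\ rooted t (qinit k) v0 /\
      leaf_covering (fun q => q = qleaf) t)
  <-> (tower k <= v0 (dk k Hk))%nat.
Proof.
  assert (Hlz : lowz k (cval v0)).
  { intros i Hi; split; unfold cval; destruct bool_dec; auto; apply Hv0; simpl; lia. }
  assert (Hdk : v0 (dk k Hk) = cval v0 (cd k)) by (rewrite <- (cval_x k v0 (dk k Hk)); reflexivity).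
  rewrite Hdk. split.
  - intros [t [Hd [[Hs Hv] Hc]]].
    assert (E : forall c, cval (dvec t) c = cval v0 c) by (apply cval_ext; auto).
    rewrite <- E. apply (UB k k Hk (le_n k) t Hd Hc Hs).
    intros i Hi; rewrite !E; auto.
  - intros HT. destruct (LB k k Hk (le_n k) (cval v0) Hlz HT) as [t [Hd [[Hs Hv] Hc]]].
    exists t; repeat split; auto. intros c; rewrite Hv; apply cval_x.
Qed.
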